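(* Let $K\subset GL(4,\mathbb C)$ be the group generated by $\rho_1=\begin{pmatrix}1&0&0&0\\1&1&0&0\\0&0&1&0\\0&0&1&1\end{pmatrix}$, $\rho_2=\begin{pmatrix}1&0&0&0\\0&1&0&0\\1&0&1&0\\0&1&0&1\end{pmatrix}$, $\rho_3=\begin{pmatrix}1&-2&-2&0\\0&1&0&0\\0&0&1&0\\0&0&0&1\end{pmatrix}$, and let $$\tilde{\mathsf H}_0=\begin{pmatrix}0&2i\sqrt2&2i\sqrt2&0\\-2i\sqrt2&0&0&0\\-2i\sqrt2&0&0&0\\0&0&0&0\end{pmatrix},\qquad \mathsf R_0=\frac1{\sqrt2}\begin{pmatrix}i&0&-i&0\\0&-\frac{1+i}{\sqrt2}&0&-\frac{1-i}{\sqrt2}\\0&\frac{1-i}{\sqrt2}&0&\frac{1+i}{\sqrt2}\\1&0&1&0\end{pmatrix},\qquad \mathsf G=\begin{pmatrix}0&-2&0&2\\2&0&-2&0\\0&2&0&-2\\-2&0&2&0\end{pmatrix}.$$ Then $\mathsf R_0$ is unitary (${}^t\overline{\mathsf R_0}\mathsf R_0=\mathrm{Id}_4$), $\mathsf R_0^{-1}\tilde{\mathsf H}_0\mathsf R_0=\sqrt{-1}\,\mathsf G$, and $\sqrt{-1}\,\mathsf G$ spans the (one-dimensional) real vector space of Hermitian quadratic invariants of the conjugated group $\langle \mathsf R_0^{-1}\rho_1\mathsf R_0,\ \mathsf R_0^{-1}\rho_2\mathsf R_0,\ \mathsf R_0^{-1}\rho_3\mathsf R_0\rangle$, i.e. of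 the Hermitian matrices $Q$ with ${}^t\overline g Q g=Q$ for all $g$ in that group.
   Context: The matrices $\rho_1,\rho_2,\rho_3$ are the images of the loops around $x=0$, $y=0$ and the parabola $16(x-y)^2-8(x+y)+1=0$ under the monodromy representation (w.r.t. a twisted-cycle basis, obtained from the generalised Picard–Lefschetz theorem) of the Horn system $\big(\theta_x^2-x(2\theta_x+2\theta_y+1)(2\theta_x+2\theta_y+2)\big)f=0$, $\big(\theta_y^2-y(2\theta_x+2\theta_y+1)(2\theta_x+2\theta_y+2)\big)f=0$ ($\theta_x=x\partial_x$, $\theta_y=y\partial_y$). $\mathsf G$ is the Gram matrix, with respect to the Euler form, of the derived restrictions to a generic bi-degree $(2,2)$ curve in $\mathbb P^1\times\mathbb P^1$ of the right dual exceptional collection of $(\mathcal O,\mathcal O(1,0),\mathcal O(1,1),\mathcal O(2,1))$. *)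

(* Defs.v *)
(* complex numbers are modelled by algC (algebraic complex
   numbers); all entries involved are algebraic. *)
From HB Require Import structures.
From mathcomp Require Import all_boot all_order all_algebra all_field.
From mathcomp Require Import algC.
Set Implicit Arguments. Unset Strict Implicit. Unset Printing Implicit Defensive.
Import Order.TTheory GRing.Theory Num.Theory.
Local Open Scope ring_scope.

Definition mx4 (rows : seq (seq algC)) : 'M[algC]_4 :=
  \matrix_(i < 4, j < 4) nth 0 (nth [::] rows i) j.

Definition adjC (A : 'M[algC]_4) : 'M[algC]_4 := (map_mx (fun x : algC => x^*) A)^T.

Definition hermitian_mx4 (Q : 'M[algC]_4) : Prop := adjC Q = Q.

Inductive in_gen_group (S : seq 'M[algC]_4) : 'M[algC]_4 -> Prop :=
| gen_gen g : g \in S -> in_gen_group S g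
| gen_one : in_gen_group S 1%:M
| gen_mul g h : in_gen_group S g -> in_gen_group S h -> in_gen_group S (g *m h)
| gen_inv g : in_gen_group S g -> in_gen_group S (invmx g).

Definition sqrt2 : algC := sqrtC 2.

Definition rho1 : 'M[algC]_4 :=
  mx4 [:: [:: 1; 0; 0; 0]; [:: 1; 1; 0; 0]; [:: 0; 0; 1; 0]; [:: 0; 0; 1; 1]].
Definition rho2 : 'M[algC]_4 :=
  mx4 [:: [:: 1; 0; 0; 0]; [:: 0; 1; 0; 0]; [:: 1; 0; 1; 0]; [:: 0; 1; 0; 1]].
Definition rho3 : 'M[algC]_4 :=
  mx4 [:: [:: 1; -2; -2; 0]; [:: 0; 1; 0; 0]; [:: 0; 0; 1; 0]; [:: 0; 0; 0; 1]].

Definition H0t : 'M[algC]_4 :=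
  mx4 [:: [:: 0; 2 * 'i * sqrt2; 2 * 'i * sqrt2; 0];
          [:: - (2 * 'i * sqrt2); 0; 0; 0];
          [:: - (2 * 'i * sqrt2); 0; 0; 0];
          [:: 0; 0; 0; 0]].

Definition R0 : 'M[algC]_4 :=
  sqrt2^-1 *: mx4 [:: [:: 'i; 0; - 'i; 0];
                      [:: 0; - ((1 + 'i) / sqrt2); 0; - ((1 - 'i) / sqrt2)];
                      [:: 0; (1 - 'i) / sqrt2; 0; (1 + 'i) / sqrt2];
                      [:: 1; 0; 1; 0]].

Definition Gmx : 'M[algC]_4 :=
  mx4 [:: [:: 0; -2; 0; 2]; [:: 2; 0; -2; 0]; [:: 0; 2; 0; -2]; [:: -2; 0; 2; 0]].

Definition conjR0 (g : 'M[algC]_4) : 'M[algC]_4 := invmx R0 *m g *m R0.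

(* Main.v *)
Require Import Defs.
From HB Require Import structures.
From mathcomp Require Import all_boot all_order all_algebra all_field.
From mathcomp Require Import algC.
From mathcomp Require Import ring.
Import Order.TTheory GRing.Theory Num.Theory.
Local Open Scope ring_scope.

Notation o0 := (@Ordinal 4 0 isT).
Notation o1 := (@Ordinal 4 1 isT).
Notation o2 := (@Ordinal 4 2 isT).
Notation o3 := (@Ordinal 4 3 isT).

Lemma sum4 (F : 'I_4 -> algC) : \sum_(i < 4) F i = F o0 + F o1 + F o2 + F o3.
Proof.
rewrite !big_ord_recl big_ord0 addr0 !addrA.
by congr (_ + _ + _ + _); apply: congr1; apply: val_inj.
Qed.

Lemma ord4P (P : 'I_4 -> Prop) : P o0 -> P o1 -> P o2 -> P o3 -> forall i, P i.
Proof.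
move=> ? ? ? ? [[|[|[|[|k]]]] H] //; rewrite (bool_irrelevance H isT) //.
Qed.

Lemma mx4E (A : 'M[algC]_4) (B : 'M[algC]_4) :
  A o0 o0 = B o0 o0 -> A o0 o1 = B o0 o1 -> A o0 o2 = B o0 o2 -> A o0 o3 = B o0 o3 ->
  A o1 o0 = B o1 o0 -> A o1 o1 = B o1 o1 -> A o1 o2 = B o1 o2 -> A o1 o3 = B o1 o3 ->
  A o2 o0 = B o2 o0 -> A o2 o1 = B o2 o1 -> A o2 o2 = B o2 o2 -> A o2 o3 = B o2 o3 ->
  A o3 o0 = B o3 o0 -> A o3 o1 = B o3 o1 -> A o3 o2 = B o3 o2 -> A o3 o3 = B o3 o3 ->
  A = B.
Proof.
move=> *; apply/matrixP; apply: ord4P; apply: ord4P => //.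
Qed.

Definition s := sqrt2.
Lemma s2 : s ^+ 2 = 2. Proof. by rewrite /s /sqrt2 sqrtCK. Qed.
Lemma s_neq0 : s != 0. Proof. by rewrite /s /sqrt2 sqrtC_eq0 pnatr_eq0. Qed.
Lemma conj_s : s^* = s.
Proof. by apply/CrealP; rewrite /s /sqrt2 realE sqrtC_ge0 ler0n. Qed.
Lemma i2 : 'i ^+ 2 = -1 :> algC. Proof. exact: sqrCi. Qed.

Lemma cM (x y : algC) : (x * y)^* = x^* * y^*. Proof. exact: rmorphM. Qed.
Lemma cD (x y : algC) : (x + y)^* = x^* + y^*. Proof. exact: rmorphD. Qed.
Lemma cB (x y : algC) : (x - y)^* = x^* - y^*. Proof. exact: rmorphB. Qed.
Lemma cN (x : algC) : (- x)^* = - x^*. Proof. exact: rmorphN. Qed.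
Lemma cV (x : algC) : (x^-1)^* = (x^*)^-1. Proof. exact: fmorphV. Qed.
Lemma c1 : (1 : algC)^* = 1. Proof. exact: rmorph1. Qed.
Lemma c0 : (0 : algC)^* = 0. Proof. exact: rmorph0. Qed.
Lemma cn n : (n%:R : algC)^* = n%:R. Proof. exact: rmorph_nat. Qed.
Lemma ci : 'i^* = - 'i :> algC. Proof. exact: conjCi. Qed.

Ltac csimp := rewrite ?(cM, cD, cB, cN, cV, c1, c0, cn, ci, conj_s).

Lemma part1 : adjC R0 *m R0 = 1%:M.
Proof.
have hs := s_neq0.
apply: mx4E; rewrite /adjC /R0 !mxE sum4 !mxE /= -/s; csimp.
all: (field: s2 i2) || idtac.
all: exact: hs.
Qed.

Lemma adjC_mul (A B : 'M[algC]_4) : adjC (A *m B) = adjC B *m adjC A.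
Proof. by rewrite /adjC -trmx_mul (map_mxM Num.conj_op). Qed.

Lemma adjCK (A : 'M[algC]_4) : adjC (adjC A) = A.
Proof. by apply/matrixP=> i j; rewrite !mxE conjCK. Qed.

Lemma adjC_scale a (A : 'M[algC]_4) : adjC (a *: A) = a^* *: adjC A.
Proof. by apply/matrixP=> i j; rewrite !mxE cM. Qed.

Lemma adjC1 : adjC 1%:M = 1%:M.
Proof. by apply/matrixP=> i j; rewrite !mxE cn eq_sym. Qed.

Lemma part1' : R0 *m adjC R0 = 1%:M.
Proof. exact: mulmx1C part1. Qed.

Lemma invR : invmx R0 = adjC R0.
Proof.
have [hu _] := mulmx1_unit part1'.
by rewrite -[invmx R0]mulmx1 -part1' mulmxA mulVmx // mul1mx.
Qed.

Lemma part2 : invmx R0 *m H0t *m R0 = 'i *: Gmx.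
Proof.
have hs := s_neq0.
rewrite invR.
apply: mx4E; rewrite /adjC /R0 /H0t /Gmx !(mxE, sum4) /= -/s; csimp.
all: (field: s2 i2) || idtac.
all: exact: hs.
Qed.

Definition Mm : 'M[algC]_4 :=
  mx4 [:: [:: 0; -1; -1; 0]; [:: 1; 0; 0; 0]; [:: 1; 0; 0; 0]; [:: 0; 0; 0; 0]].
Definition cc : algC := - (2 * 'i * s).

Lemma cc_neq0 : cc != 0.
Proof.
by rewrite /cc oppr_eq0 !mulf_neq0 ?s_neq0 ?pnatr_eq0 ?neq0Ci.
Qed.

Lemma H0M : H0t = cc *: Mm.
Proof. apply: mx4E; rewrite /H0t /Mm /cc !mxE /= -/s; ring. Qed.

Lemma UMU : adjC R0 *m Mm *m R0 = cc^-1 *: ('i *: Gmx).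
Proof.
rewrite -part2 invR H0M -[adjC R0 *m (cc *: Mm)]scalemxAr -[(cc *: _) *m R0]scalemxAl scalerA mulVf ?cc_neq0 // scale1r.
by [].
Qed.

Lemma UGU : R0 *m ('i *: Gmx) *m adjC R0 = cc *: Mm.
Proof.
have E : 'i *: Gmx = cc *: (adjC R0 *m Mm *m R0).
  by rewrite UMU scalerA mulfV ?cc_neq0 // scale1r.
rewrite E -[R0 *m (cc *: _)]scalemxAr -[(cc *: _) *m adjC R0]scalemxAl; congr (_ *: _).
by rewrite !mulmxA part1' mul1mx -mulmxA part1' mulmx1.
Qed.




Lemma mulE (A B : 'M[algC]_4) i j :
  (A *m B) i j = A i o0 * B o0 j + A i o1 * B o1 j + A i o2 * B o2 j + A i o3 * B o3 j.
Proof. by rewrite mxE sum4. Qed.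
Lemma trE (A : 'M[algC]_4) i j : A^T i j = A j i. Proof. by rewrite mxE. Qed.
Lemma mx4e rows i j : mx4 rows i j = nth 0 (nth [::] rows i) j. Proof. by rewrite mxE. Qed.
Lemma scE a (A : 'M[algC]_4) i j : (a *: A) i j = a * A i j. Proof. by rewrite mxE. Qed.
Lemma adjE (A : 'M[algC]_4) i j : adjC A i j = (A j i)^*. Proof. by rewrite !mxE. Qed.

Ltac msimp := rewrite ?adjE ?mulE ?trE ?scE ?mx4e; cbn [nth nat_of_ord].

Lemma adjC_rho1 : adjC rho1 = rho1^T.
Proof. by apply: mx4E; rewrite /rho1; msimp; csimp. Qed.
Lemma adjC_rho2 : adjC rho2 = rho2^T.
Proof. by apply: mx4E; rewrite /rho2; msimp; csimp. Qed.
Lemma adjC_rho3 : adjC rho3 = rho3^T.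
Proof. by apply: mx4E; rewrite /rho3; msimp; csimp. Qed.

Lemma rhoM1 : rho1^T *m Mm *m rho1 = Mm.
Proof. apply: mx4E; rewrite /Mm /rho1; msimp; ring. Qed.
Lemma rhoM2 : rho2^T *m Mm *m rho2 = Mm.
Proof. apply: mx4E; rewrite /Mm /rho2; msimp; ring. Qed.
Lemma rhoM3 : rho3^T *m Mm *m rho3 = Mm.
Proof. apply: mx4E; rewrite /Mm /rho3; msimp; ring. Qed.

Lemma lc (a b x y k : algC) : a = b -> k != 0 -> a - b = k * (x - y) -> x = y.
Proof.
move=> -> hk; rewrite subrr => /esym /eqP; rewrite mulf_eq0 (negbTE hk) /= subr_eq0.
by move/eqP.
Qed.

Lemma m2 : (-2 : algC) != 0. Proof. by rewrite oppr_eq0 pnatr_eq0. Qed.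
Lemma p1 : (1 : algC) != 0. Proof. exact: oner_neq0. Qed.





Arguments lc {a b x y k}.

Lemma linsol (P : 'M[algC]_4) :
  rho1^T *m P *m rho1 = P -> rho2^T *m P *m rho2 = P -> rho3^T *m P *m rho3 = P ->
  P = P o2 o0 *: Mm.
Proof.
move=> /matrixP E1 /matrixP E2 /matrixP E3.
have h11 : P o1 o1 = 0 by apply: (lc (E1 o0 o1) p1); rewrite /rho1; msimp; ring.
have h13 : P o1 o3 = 0 by apply: (lc (E1 o0 o3) p1); rewrite /rho1; msimp; ring.
have h31 : P o3 o1 = 0 by apply: (lc (E1 o2 o1) p1); rewrite /rho1; msimp; ring.
have h33 : P o3 o3 = 0 by apply: (lc (E1 o2 o3) p1); rewrite /rho1; msimp; ring.
have h22 : P o2 o2 = 0 by apply: (lc (E2 o0 o2) p1); rewrite /rho2; msimp; ring.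
have h23 : P o2 o3 = 0 by apply: (lc (E2 o0 o3) p1); rewrite /rho2; msimp; ring.
have h32 : P o3 o2 = 0 by apply: (lc (E2 o1 o2) p1); rewrite /rho2; msimp; ring.
have h00 : P o0 o0 = 0 by apply: (lc (E3 o0 o1) m2); rewrite /rho3; msimp; ring.
have h03 : P o0 o3 = 0 by apply: (lc (E3 o1 o3) m2); rewrite /rho3; msimp; ring.
have h30 : P o3 o0 = 0 by apply: (lc (E3 o3 o1) m2); rewrite /rho3; msimp; ring.
have h12 : P o1 o2 = 0 by apply: (lc (E1 o0 o2) p1); rewrite /rho1; msimp; rewrite h03 h13; ring.
have h21 : P o2 o1 = 0 by apply: (lc (E1 o2 o0) p1); rewrite /rho1; msimp; rewrite h30 h31; ring.
have h01 : P o0 o1 = - P o2 o0 by apply: (lc (E3 o2 o1) m2); rewrite /rho3; msimp; rewrite h00; ring.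
have h02 : P o0 o2 = - P o2 o0 by apply: (lc (E3 o2 o2) m2); rewrite /rho3; msimp; rewrite h00; ring.
have h10 : P o1 o0 = P o2 o0 by apply: (lc (E3 o1 o2) m2); rewrite /rho3; msimp; rewrite h00 h02; ring.
apply: mx4E; rewrite /Mm scE mx4e; cbn [nth nat_of_ord];
  rewrite ?(h00, h01, h02, h03, h10, h11, h12, h13, h21, h22, h23, h30, h31, h32, h33); ring.
Qed.



Lemma conj_gen rho (hr : adjC rho = rho^T) Q :
  adjC (conjR0 rho) *m Q *m conjR0 rho =
  adjC R0 *m (rho^T *m (R0 *m Q *m adjC R0) *m rho) *m R0.
Proof. by rewrite /conjR0 invR !adjC_mul adjCK hr !mulmxA. Qed.

Lemma QfromP Q : Q = adjC R0 *m (R0 *m Q *m adjC R0) *m R0.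
Proof. by rewrite !mulmxA part1 mul1mx -mulmxA part1 mulmx1. Qed.

Lemma gen_iff rho (hr : adjC rho = rho^T) Q :
  adjC (conjR0 rho) *m Q *m conjR0 rho = Q <->
  rho^T *m (R0 *m Q *m adjC R0) *m rho = R0 *m Q *m adjC R0.
Proof.
rewrite conj_gen //; split => [|->]; last by rewrite -QfromP.
move: (rho^T *m _ *m rho) => X <-.
by rewrite !mulmxA part1' mul1mx -mulmxA part1' mulmx1.
Qed.

Lemma adjC_iG : adjC ('i *: Gmx) = 'i *: Gmx.
Proof. apply: mx4E; rewrite /Gmx; msimp; csimp; ring. Qed.

Lemma group_inv S Q : (forall g, g \in S -> adjC g *m Q *m g = Q) ->
  forall g, in_gen_group S g -> adjC g *m Q *m g = Q.
Proof.
move=> HS g; elim => {g} [g /HS //| | g h _ IHg _ IHh | g _ IH].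
- by rewrite adjC1 mul1mx mulmx1.
- rewrite adjC_mul.
  have -> : adjC h *m adjC g *m Q *m (g *m h) = adjC h *m (adjC g *m Q *m g) *m h.
    by rewrite !mulmxA.
  by rewrite IHg IHh.
- case: (boolP (g \in unitmx)) => hu; last by rewrite invmx_out ?inE.
  rewrite -[X in _ *m X *m _]IH !mulmxA -adjC_mul mulmxV // adjC1 mul1mx.
  by rewrite -mulmxA mulmxV // mulmx1.
Qed.

Lemma rho_scale rho a : rho^T *m Mm *m rho = Mm -> rho^T *m (a *: Mm) *m rho = a *: Mm.
Proof.
by move=> h; rewrite -[rho^T *m (a *: Mm)]scalemxAr -[(a *: _) *m rho]scalemxAl h.
Qed.

Lemma Pform r : R0 *m (r *: ('i *: Gmx)) *m adjC R0 = (r * cc) *: Mm.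
Proof.
rewrite -[R0 *m (r *: _)]scalemxAr -[(r *: _) *m adjC R0]scalemxAl UGU.
by rewrite scalerA.
Qed.

Lemma Qform Q q : R0 *m Q *m adjC R0 = q *: Mm ->
  Q = (q / cc) *: ('i *: Gmx).
Proof.
move=> HP; rewrite {1}(QfromP Q) HP.
rewrite -[adjC R0 *m (_ *: Mm)]scalemxAr -[(_ *: _) *m R0]scalemxAl UMU.
by rewrite scalerA mulrC.
Qed.

Theorem proposition4p2 :
  adjC R0 *m R0 = 1%:M /\
  invmx R0 *m H0t *m R0 = 'i *: Gmx /\
  (forall Q : 'M[algC]_4,
     (hermitian_mx4 Q /\
      (forall g, in_gen_group [:: conjR0 rho1; conjR0 rho2; conjR0 rho3] g ->
                 adjC g *m Q *m g = Q))
     <-> exists2 r : algC, r \is Num.real & Q = r *: ('i *: Gmx)).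
Proof.
split; first exact: part1.
split; first exact: part2.
move=> Q; split.
- case=> herm inv.
  have E1 := (gen_iff _ adjC_rho1 Q).1 (inv _ (gen_gen (mem_head _ _))).
  have E2 : rho2^T *m (R0 *m Q *m adjC R0) *m rho2 = R0 *m Q *m adjC R0.
    by apply/(gen_iff _ adjC_rho2)/inv/gen_gen; rewrite !inE eqxx ?orbT.
  have E3 : rho3^T *m (R0 *m Q *m adjC R0) *m rho3 = R0 *m Q *m adjC R0.
    by apply/(gen_iff _ adjC_rho3)/inv/gen_gen; rewrite !inE eqxx ?orbT.
  have hQ := Qform _ _ (linsol _ E1 E2 E3).
  set r := _ / cc in hQ.
  exists r => //.
  apply/CrealP.
  move: herm; rewrite /hermitian_mx4 hQ adjC_scale adjC_iG => /matrixP/(_ o0 o1).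
  rewrite !scE /Gmx mx4e; cbn [nth nat_of_ord].
  apply: mulIf; by rewrite mulf_neq0 ?neq0Ci ?oppr_eq0 ?pnatr_eq0.
- case=> r hr ->; split.
    by rewrite /hermitian_mx4 adjC_scale adjC_iG (conj_Creal hr).
  apply: group_inv => g; rewrite !inE => /or3P [] /eqP ->.
  + by apply/(gen_iff _ adjC_rho1); rewrite Pform rho_scale // rhoM1.
  + by apply/(gen_iff _ adjC_rho2); rewrite Pform rho_scale // rhoM2.
  + by apply/(gen_iff _ adjC_rho3); rewrite Pform rho_scale // rhoM3.
Qed.
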